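(* There exist absolute constants $C, c > 0$ such that the following holds. Let $1 \le d \le n$ be integers, $p = \binom{n}{d}$, and let ${\bm{x}} \in \mathbb{R}^p$ follow the random tensor model of degree $d$ generated by $x\in\mathbb{R}^n$, and let $K = \max_{1\le i\le n}\mathbb{E}x_i^4$. If $K^{1/2} d / n^{1/3} < c$, then for every deterministic matrix $A \in \mathbb{R}^{p\times p}$, $$\operatorname{Var}({\bm{x}}^\mathsf{T} A {\bm{x}}) \le C\|A\|^2 p^2 \Big(\frac{K^{1/2} d}{n^{1/3}}\Big)^{3/2},$$ where $\|A\|$ is the spectral norm.
   Context: Random tensor model of degree $d$: let $x = (x_1,\dots,x_n) \in \mathbb{R}^n$ have independent entries with $\mathbb{E}x_i = 0$ and $\mathbb{E}x_i^2 = 1$. The random vector ${\bm{x}} \in \mathbb{R}^{\binom{n}{d}}$ has entries indexed by $d$-element subsets $\mathbf{i} \subset [n]$, given by ${\bm{x}}_{\mathbf{i}} = \prod_{i \in \mathbf{i}} x_i$. *)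

(* Defs.v *)
From HB Require Import structures.
From mathcomp Require Import all_boot all_order all_algebra.
Set Implicit Arguments. Unset Strict Implicit. Unset Printing Implicit Defensive.
Import Order.TTheory GRing.Theory Num.Theory.
Local Open Scope ring_scope.

(* d-element subsets of [n] = {0,...,n-1}: the index set of R^p, p = 'C(n,d). *)
Definition dsub (n d : nat) := {I : {set 'I_n} | #|I| == d}.

Section Model.
Variables (R : rcfType) (Omega : Type) (n : nat).

Definition monom (x : 'I_n -> Omega -> R) (a : 'I_n -> nat) : Omega -> R :=
  fun w => \prod_(i < n) x i w ^+ a i.

(* random variables that are polynomials in x of degree <= 4 in each variable
   (these are integrable whenever E x_i^4 < oo) *)
Definition poly4 (x : 'I_n -> Omega -> R) (f : Omega -> R) : Prop :=
  exists m (c : 'I_m -> R) (a : 'I_m -> 'I_n -> nat),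
    (forall k i, (a k i <= 4)%N) /\
    forall w, f w = \sum_(k < m) c k * monom x (a k) w.

(* E is an expectation for which x_1..x_n are independent, centered, with unit
   variance and finite fourth moments. *)
Definition indep_model (E : (Omega -> R) -> R) (x : 'I_n -> Omega -> R) : Prop :=
  (forall (a : R) f g, E (fun w => a * f w + g w) = a * E f + E g) /\
  E (fun _ => 1) = 1 /\
  (forall f, poly4 x f -> (forall w, 0 <= f w) -> 0 <= E f) /\
  (forall a : 'I_n -> nat, (forall i, (a i <= 4)%N) ->
     E (monom x a) = \prod_(i < n) E (fun w => x i w ^+ a i)) /\
  (forall i, E (x i) = 0) /\
  (forall i, E (fun w => x i w ^+ 2) = 1).

Definition variance (E : (Omega -> R) -> R) (f : Omega -> R) : R :=
  E (fun w => f w ^+ 2) - (E f) ^+ 2.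

Definition rtensor (d : nat) (x : 'I_n -> Omega -> R) (I : dsub n d) : Omega -> R :=
  fun w => \prod_(i in val I) x i w.

Definition quadform (d : nat) (x : 'I_n -> Omega -> R) (A : dsub n d -> dsub n d -> R)
  : Omega -> R :=
  fun w => \sum_(I : dsub n d) \sum_(J : dsub n d) rtensor x I w * A I J * rtensor x J w.

Definition Kmax (E : (Omega -> R) -> R) (x : 'I_n -> Omega -> R) : R :=
  \big[Num.max/0]_(i < n) E (fun w => x i w ^+ 4).
End Model.

Definition vnorm (R : rcfType) (T : finType) (v : T -> R) : R :=
  Num.sqrt (\sum_(t : T) v t ^+ 2).

Definition mxapp (R : rcfType) (T : finType) (A : T -> T -> R) (v : T -> R) : T -> R :=
  fun i => \sum_(j : T) A i j * v j.

Definition is_spectral_norm (R : rcfType) (T : finType) (A : T -> T -> R) (s : R) : Prop :=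
  (forall v, vnorm (mxapp A v) <= s * vnorm v) /\
  (forall s', (forall v, vnorm (mxapp A v) <= s' * vnorm v) -> s <= s').

(* Main.v *)
Require Import Defs.
From HB Require Import structures.
From mathcomp Require Import all_boot all_order all_algebra.
From Stdlib Require Import FunctionalExtensionality.
From mathcomp Require Import ring lra zify.
Set Implicit Arguments. Unset Strict Implicit. Unset Printing Implicit Defensive.
Import Order.TTheory GRing.Theory Num.Theory.
Local Open Scope ring_scope.


Section Basics.
Variables (R : rcfType) (Omega : Type) (n : nat).
Variables (E : (Omega -> R) -> R) (x : 'I_n -> Omega -> R).
Hypothesis HE : indep_model E x.

Lemma Eext f g : (forall w, f w = g w) -> E f = E g.
Proof. by move=> H; congr E; apply: functional_extensionality. Qed.

Lemma Elin (a : R) f g : E (fun w => a * f w + g w) = a * E f + E g.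
Proof. by case: HE. Qed.

Lemma E0 : E (fun _ => 0) = 0.
Proof.
have := Elin (-1) (fun _ => 0) (fun _ => 0).
rewrite (@Eext (fun w => -1 * 0 + 0) (fun _ => 0)); last by move=> w; rewrite mulr0 addr0.
by rewrite mulN1r addNr.
Qed.

Lemma EZ a f : E (fun w => a * f w) = a * E f.
Proof.
rewrite -[RHS]addr0 -E0 -Elin; apply: Eext => w; by rewrite addr0.
Qed.

Lemma ED f g : E (fun w => f w + g w) = E f + E g.
Proof. rewrite -[E f]mul1r -Elin; apply: Eext => w; by rewrite mul1r. Qed.

Lemma Esum (I : Type) (r : seq I) (P : pred I) (F : I -> Omega -> R) :
  E (fun w => \sum_(i <- r | P i) F i w) = \sum_(i <- r | P i) E (F i).
Proof.
elim: r => [|i r IH].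
  rewrite big_nil; transitivity (E (fun _ => 0)); last exact: E0.
  apply: Eext => w; by rewrite big_nil.
rewrite big_cons; case Pi: (P i).
  rewrite -IH -ED; apply: Eext => w /=; by rewrite big_cons Pi.
rewrite -IH; apply: Eext => w /=; by rewrite big_cons Pi.
Qed.

Lemma E1 : E (fun _ => 1) = 1. Proof. by move: HE; rewrite /indep_model => -[_ [H _]]. Qed.

Definition mom i k := E (fun w => x i w ^+ k).

Lemma mom0 i : mom i 0 = 1.
Proof. rewrite /mom -E1; apply: Eext => w; by rewrite expr0. Qed.
Lemma mom1 i : mom i 1 = 0.
Proof. move: HE; rewrite /indep_model => -[_ [_ [_ [_ [H _]]]]]; rewrite /mom -(H i); apply: Eext => w; by rewrite expr1. Qed.
Lemma mom2 i : mom i 2 = 1.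
Proof. move: HE; rewrite /indep_model => -[_ [_ [_ [_ [_ H]]]]]; rewrite /mom; exact: H. Qed.

Lemma Emonom (a : 'I_n -> nat) : (forall i, (a i <= 4)%N) ->
  E (monom x a) = \prod_(i < n) mom i (a i).
Proof. move: HE; rewrite /indep_model => -[_ [_ [_ [H _]]]] Ha; rewrite /mom; exact: H. Qed.

Definition delta (i : 'I_n) (k : nat) : 'I_n -> nat := fun j => if j == i then k else 0%N.

Lemma monom_delta i k w : monom x (delta i k) w = x i w ^+ k.
Proof.
rewrite /monom (bigD1 i) //= /delta eqxx big1 ?mulr1 // => j /negbTE ->; by rewrite expr0.
Qed.

Lemma Epos_quad i (l c : R) : 0 <= mom i 4 + 2 * l * mom i 3 + (l ^+ 2 + 2 * c) + c ^+ 2.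
Proof.
move: HE; rewrite /indep_model => -[_ [_ [Hp _]]].
pose f := fun w => (x i w ^+ 2 + l * x i w + c) ^+ 2.
have Hf : forall w, f w = 1 * x i w ^+ 4 + ((2 * l) * x i w ^+ 3 + ((l ^+ 2 + 2 * c) * x i w ^+ 2
    + ((2 * l * c) * x i w ^+ 1 + c ^+ 2 * x i w ^+ 0))).
  move=> w; rewrite /f; rewrite !exprS !expr0; ring.
have : 0 <= E f.
  apply: Hp; last by move=> w; rewrite /f sqr_ge0.
  exists 5%N, (fun k : 'I_5 => [:: 1; 2 * l; l ^+ 2 + 2 * c; 2 * l * c; c ^+ 2]`_k),
    (fun k : 'I_5 => delta i (4 - k)); split.
    by move=> k j; rewrite /delta; case: ifP => // _; rewrite leq_subr.
  move=> w; rewrite Hf !big_ord_recr big_ord0 /= !monom_delta; ring.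
rewrite (Eext Hf) !ED !EZ -!/(mom i _) mom1 mom0 mom2.
move=> H; apply: le_trans H _; rewrite le_eqVlt; apply/orP; left; apply/eqP; ring.
Qed.

Definition kap := Kmax E x.
Definition sK := Num.sqrt kap.

Lemma mom4_le i : mom i 4 <= kap.
Proof. rewrite /kap /Kmax; exact: (le_bigmax 0 (fun i => mom i 4) i). Qed.

Lemma mom4_ge1 i : 1 <= mom i 4.
Proof. have := Epos_quad i 0 (-1). move=> H. rewrite expr0n /= !mulr0 mul0r in H. nra. Qed.

Lemma kap_ge1 (i : 'I_n) : 1 <= kap.
Proof. exact: le_trans (mom4_ge1 i) (mom4_le i). Qed.

Lemma sK_ge1 (i : 'I_n) : 1 <= sK.
Proof. have h := kap_ge1 i; rewrite /sK -sqrtr1 ler_sqrt //; exact: le_trans ler01 h. Qed.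

Lemma sK2 (i : 'I_n) : sK ^+ 2 = kap.
Proof. rewrite /sK sqr_sqrtr //; apply: le_trans (kap_ge1 i); exact: ler01. Qed.

Lemma mom3_le i : `|mom i 3| <= sK.
Proof.
have h1 := sK_ge1 i; have h2 := sK2 i; have h3 := mom4_le i.
have Hp := Epos_quad i sK 0; have Hm := Epos_quad i (- sK) 0.
rewrite !mulr0 !addr0 expr0n /= addr0 in Hp Hm.
rewrite sqrrN in Hm.
rewrite ler_norml; apply/andP; split; nra.
Qed.

Lemma mom_le i k : (k <= 4)%N -> `|mom i k| <= sK ^+ (k - 2).
Proof.
have h1 := sK_ge1 i.
case: k => [|[|[|[|[|k]]]]] //= _.
- by rewrite mom0 normr1.
- by rewrite mom1 normr0 expr0 ler01.
- by rewrite mom2 normr1.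
- by rewrite expr1 mom3_le.
- rewrite (sK2 i) ger0_norm ?mom4_le //; apply: le_trans (mom4_ge1 i); exact: ler01.
Qed.

Definition bsum (I J K L : {set 'I_n}) (i : 'I_n) : nat :=
  ((i \in I) + (i \in J) + (i \in K) + (i \in L))%N.

Definition rt (S : {set 'I_n}) (w : Omega) : R := \prod_(i in S) x i w.

Lemma rt_pow S w : rt S w = \prod_(i < n) x i w ^+ (i \in S).
Proof. rewrite /rt big_mkcond /=; apply: eq_bigr => i _; by case: (i \in S). Qed.

Lemma rt4 I J K L w : rt I w * rt J w * rt K w * rt L w = monom x (bsum I J K L) w.
Proof. rewrite !rt_pow /monom -!big_split /=; apply: eq_bigr => i _; by rewrite /bsum !exprD. Qed.

Lemma bsum_le4 I J K L i : (bsum I J K L i <= 4)%N.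
Proof. rewrite /bsum; by case: (i \in I); case: (i \in J); case: (i \in K); case: (i \in L). Qed.

Definition M I J K L := \prod_(i < n) mom i (bsum I J K L i).

Lemma EM I J K L : E (fun w => rt I w * rt J w * rt K w * rt L w) = M I J K L.
Proof. rewrite (Eext (rt4 I J K L)) Emonom //; exact: bsum_le4. Qed.

Definition e I J := M I J set0 set0.

Lemma e_eq I J : e I J = (I == J)%:R.
Proof.
rewrite /e /M; case: eqP => [<-|/eqP neq].
  rewrite big1 // => i _; rewrite /bsum !inE !addn0; case: (i \in I); [exact: mom2 | exact: mom0].
have [i Hi] : exists i, (i \in I) != (i \in J).
  apply/existsP; move: neq; apply: contraR; rewrite negb_exists => /forallP H.
  apply/eqP/setP => i; move: (H i); by rewrite negbK => /eqP.
rewrite (bigD1 i) //= /bsum !inE !addn0.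
have -> : ((i \in I) + (i \in J) = 1)%N by move: Hi; case: (i \in I); case: (i \in J).
by rewrite mom1 mul0r.
Qed.

Lemma e_rt I J : E (fun w => rt I w * rt J w) = e I J.
Proof. rewrite /e -EM; apply: Eext => w; by rewrite /rt !big_set0 !mulr1. Qed.

Lemma var_formula d (A : dsub n d -> dsub n d -> R) :
  variance E (quadform x A) = \sum_(I : dsub n d) \sum_(J : dsub n d) \sum_(K : dsub n d) \sum_(L : dsub n d)
    A I J * A K L * (M (val I) (val J) (val K) (val L) - e (val I) (val J) * e (val K) (val L)).
Proof.
have EQ : E (quadform x A) = \sum_(I : dsub n d) \sum_(J : dsub n d) A I J * e (val I) (val J).
  rewrite /quadform Esum; apply: eq_bigr => I _; rewrite Esum; apply: eq_bigr => J _.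
  rewrite -e_rt -EZ; apply: Eext => w; rewrite /rtensor /rt; ring.
have EQ2 : E (fun w => quadform x A w ^+ 2) = \sum_(I : dsub n d) \sum_(J : dsub n d) \sum_(K : dsub n d) \sum_(L : dsub n d)
    A I J * A K L * M (val I) (val J) (val K) (val L).
  transitivity (E (fun w => \sum_(I : dsub n d) \sum_(J : dsub n d) \sum_(K : dsub n d) \sum_(L : dsub n d)
    A I J * A K L * (rt (val I) w * rt (val J) w * rt (val K) w * rt (val L) w))).
    apply: Eext => w; rewrite expr2 /quadform mulr_suml; apply: eq_bigr => I _.
    rewrite mulr_suml; apply: eq_bigr => J _; rewrite mulr_sumr; apply: eq_bigr => K _.
    rewrite mulr_sumr; apply: eq_bigr => L _; rewrite /rtensor /rt; ring.
  rewrite Esum; apply: eq_bigr => I _; rewrite Esum; apply: eq_bigr => J _.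
  rewrite Esum; apply: eq_bigr => K _; rewrite Esum; apply: eq_bigr => L _.
  by rewrite EZ EM.
rewrite /variance EQ2 EQ expr2 mulr_suml -sumrB; apply: eq_bigr => I _.
rewrite mulr_suml -sumrB; apply: eq_bigr => J _.
rewrite mulr_sumr -sumrB; apply: eq_bigr => K _.
rewrite mulr_sumr -sumrB; apply: eq_bigr => L _; ring.
Qed.

Lemma card_sum (S : {set 'I_n}) : #|S| = (\sum_(i < n) (i \in S))%N.
Proof. rewrite -sum1_card big_mkcond /=; apply: eq_bigr => i _; by case: (i \in S). Qed.

Lemma M_abs (i0 : 'I_n) I J K L :
  `|M I J K L| <= sK ^+ (#|K :&: (I :|: J)| + #|L :&: (I :|: J)|).
Proof.
rewrite /M normr_prod !card_sum -big_split /= -prodrXr.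
apply: ler_prod => i _; rewrite normr_ge0 /=.
apply: le_trans (mom_le i (bsum_le4 I J K L i)) _.
apply: ler_weXn2l; first exact: sK_ge1 i0.
rewrite /bsum !inE.
by case: (i \in I); case: (i \in J); case: (i \in K); case: (i \in L).
Qed.

Lemma M_zero I J K L : K :\: (I :|: J) != L :\: (I :|: J) -> M I J K L = 0.
Proof.
move=> neq.
have [i Hi] : exists i, (i \in K :\: (I :|: J)) != (i \in L :\: (I :|: J)).
  apply/existsP; move: neq; apply: contraR; rewrite negb_exists => /forallP H.
  apply/eqP/setP => i; move: (H i); by rewrite negbK => /eqP.
rewrite /M (bigD1 i) //=.
have -> : bsum I J K L i = 1%N.
  move: Hi; rewrite /bsum !inE.
  by case: (i \in I); case: (i \in J); case: (i \in K); case: (i \in L).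
by rewrite mom1 mul0r.
Qed.

Lemma M_diag I J K : K :&: (I :|: J) = set0 -> M I J K K = e I J.
Proof.
move=> H; rewrite /e /M; apply: eq_bigr => i _.
have : i \notin K :&: (I :|: J) by rewrite H inE.
rewrite /bsum !inE.
case: (i \in I); case: (i \in J); case: (i \in K) => //= _; by rewrite mom2 mom0.
Qed.

Lemma e01 I J : `|e I J| <= 1.
Proof. by rewrite e_eq; case: (I == J); rewrite ?normr1 ?normr0 ?ler01. Qed.

Lemma w_bound (i0 : 'I_n) (I J K L : {set 'I_n}) : #|K| = #|L| ->
  `|M I J K L - e I J * e K L| <=
    ((K :\: (I :|: J) == L :\: (I :|: J)) && (K :&: (I :|: J) != set0))%:R * (2 * kap ^+ #|K :&: (I :|: J)|).
Proof.
move=> cKL; set U := I :|: J.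
have k1 : 1 <= kap by exact: kap_ge1 i0.
have kp : 1 <= kap ^+ #|K :&: U| by apply: exprn_ege1.
case: eqP => [eqD|/eqP neqD]; last first.
  rewrite M_zero // (e_eq K L).
  have -> : (K == L) = false.
    apply/negbTE; move: neqD; apply: contra => /eqP ->; exact: eqxx.
  by rewrite mulr0 subr0 normr0 mul0r.
case: eqP => [KU0|/eqP KU0] /=.
  have eKL : K = L.
    apply/eqP; rewrite eqEcard cKL leqnn andbT; apply/subsetP => i iK.
    have : i \in K :\: U.
      rewrite inE iK andbT; apply/negP => iU.
      have : i \in K :&: U by rewrite inE iK iU.
      by rewrite KU0 inE.
    by rewrite eqD inE => /andP[].
  rewrite -eKL M_diag // (e_eq K K) eqxx mulr1 subrr normr0 mul0r; exact: lexx.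
have cLU : #|L :&: U| = #|K :&: U|.
  have h1 := cardsID U K; have h2 := cardsID U L.
  rewrite eqD in h1; move: h1 h2; rewrite cKL; lia.
rewrite mul1r; apply: le_trans (ler_normB _ _) _.
rewrite mulr2n mulrDl mul1r; apply: lerD.
  apply: le_trans (M_abs i0 I J K L) _; rewrite cLU addnn -mul2n exprM (sK2 i0); exact: lexx.
rewrite normrM; apply: le_trans kp; rewrite -[1]mulr1; apply: ler_pM; rewrite ?normr_ge0 //; exact: e01.
Qed.
End Basics.


Lemma sum_bool_card (T : finType) (P : pred T) : (\sum_(i : T) (P i : nat))%N = #|[set i | P i]|.
Proof. rewrite -sum1dep_card [RHS]big_mkcond /=; apply: eq_bigr => i _; by case: (P i). Qed.

Lemma bin_le_exp u t : ('C(u, t) <= u ^ t)%N.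
Proof.
apply: (@leq_trans ('C(u,t) * t`!)); first by rewrite leq_pmulr ?fact_gt0.
rewrite bin_ffact ffact_prod; apply: (@leq_trans (\prod_(i < t) u)).
  by apply: leq_prod => i _; rewrite leq_subr.
by rewrite prod_nat_const card_ord.
Qed.

Section Comb.
Variables (n d : nat).
Local Notation D := (dsub n d).

Lemma cardD (K : D) : #|val K| = d.
Proof. exact: (eqP (valP K)). Qed.

Lemma countL (U : {set 'I_n}) (K : D) :
  (\sum_(L : D) ((val K :\: U == val L :\: U) : nat) <= 'C(#|U|, #|val K :&: U|))%N.
Proof.
rewrite sum_bool_card -cards_draws.
set A := [set L : D | _].
rewrite -(@card_in_imset _ _ (fun L : D => val L :&: U)).
  apply: subset_leq_card; apply/subsetP => T /imsetP [L]; rewrite /A inE => /eqP HL ->.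
  rewrite inE subsetIr /=.
  have h1 := cardsID U (val K); have h2 := cardsID U (val L).
  rewrite HL cardD in h1; rewrite cardD in h2; rewrite -(eqn_add2r #|val L :\: U|) h2 h1 eqxx //.
move=> L1 L2; rewrite /A !inE => /eqP H1 /eqP H2 H; apply: val_inj.
by rewrite -(setID (val L1) U) -(setID (val L2) U) H -H1 -H2.
Qed.

Lemma countT (T : {set 'I_n}) :
  (#|[set K : D | T \subset val K]| <= 'C(n - #|T|, d - #|T|))%N.
Proof.
have -> : (n - #|T|)%N = #|~: T|.
  have h := cardsC T; rewrite card_ord in h.
  apply/eqP; rewrite -(eqn_add2l #|T|) subnKC; first by rewrite h.
  by rewrite -[X in (_ <= X)%N]h leq_addr.
rewrite -cards_draws.
rewrite -(@card_in_imset _ _ (fun K : D => val K :\: T)).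
  apply: subset_leq_card; apply/subsetP => S /imsetP [K]; rewrite inE => HK ->.
  rewrite inE; apply/andP; split.
    by apply/subsetP => i; rewrite !inE => /andP[].
  have h1 := cardsID T (val K); rewrite cardD (setIidPr HK) in h1; apply/eqP; rewrite -[X in (X - _)%N]h1 addKn //.
move=> K1 K2; rewrite !inE => H1 H2 H; apply: val_inj.
by rewrite -(setID (val K1) T) -(setID (val K2) T) H (setIidPr H1) (setIidPr H2).
Qed.


Lemma sumK_bin_nat (U : {set 'I_n}) t :
  (\sum_(K : D) 'C(#|val K :&: U|, t) <= 'C(#|U|, t) * 'C(n - t, d - t))%N.
Proof.
under eq_bigr => K _ do rewrite -cards_draws -sum_bool_card.
rewrite exchange_big /= -cards_draws -sum_bool_card big_distrl /=.
apply: leq_sum => T _.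
case: (boolP ((T \subset U) && (#|T| == t))) => H; last first.
  rewrite mul0n big1 // => K _.
  apply/eqP; rewrite eqb0; apply: contra H; rewrite subsetI.
  by case/andP => /andP[_ ->] ->.
rewrite mul1n; case/andP: H => _ /eqP <-.
apply: leq_trans (countT T).
rewrite sum_bool_card; apply: subset_leq_card; apply/subsetP => K.
by rewrite !inE subsetI => /andP[/andP[-> _] _].
Qed.
End Comb.

Lemma bin_ratio (R : rcfType) (t n d : nat) : (t <= d)%N -> (d <= n)%N ->
  ('C(n - t, d - t))%:R <= ('C(n, d))%:R * (d%:R / n%:R) ^+ t :> R.
Proof.
elim: t n d => [|t IH] n d htd hdn.
  by rewrite !subn0 expr0 mulr1.
case: n hdn => [|n']; first by case: d htd.
case: d htd => [//|d'] htd hdn.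
rewrite !subSS.
have hd'n' : (d' <= n')%N by [].
apply: le_trans (IH n' d' htd hd'n') _.
have hb : ('C(n', d'))%:R = ('C(n'.+1, d'.+1))%:R * (d'.+1%:R / n'.+1%:R) :> R.
  have := mul_bin_diag n'.+1 d'; rewrite /= => /(congr1 (fun m => m%:R : R)); rewrite !natrM => H.
  have hn : n'.+1%:R != 0 :> R by rewrite pnatr_eq0.
  apply: (mulfI hn); rewrite H; field; by rewrite addrC natr1.
rewrite hb exprS -mulrA; apply: ler_wpM2l; first exact: ler0n.
apply: ler_wpM2l.
  by apply: divr_ge0; apply: ler0n.
apply: lerXn2r; rewrite ?nnegrE ?divr_ge0 ?ler0n //.
case: n' hd'n' hdn {IH hb} => [|n'] hd'n' hdn.
  by rewrite invr0 mulr0 divr_ge0 ?ler0n.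
rewrite ler_pdivrMr ?ltr0Sn // mulrAC ler_pdivlMr ?ltr0Sn //.
rewrite -!natrM ler_nat; nia.
Qed.


Lemma sumK_bin (R : rcfType) n d (U : {set 'I_n}) t : (d <= n)%N ->
  (\sum_(K : dsub n d) 'C(#|val K :&: U|, t))%:R
    <= ('C(#|U|, t))%:R * (('C(n, d))%:R * (d%:R / n%:R) ^+ t) :> R.
Proof.
move=> hdn; case: (leqP t d) => htd.
  apply: le_trans (_ : ('C(#|U|, t) * 'C(n - t, d - t))%:R <= _).
    by rewrite ler_nat sumK_bin_nat.
  rewrite natrM; apply: ler_wpM2l; first exact: ler0n.
  exact: bin_ratio.
rewrite big1 ?mulr_ge0 ?ler0n ?exprn_ge0 ?divr_ge0 ?ler0n // => K _.
apply: bin_small; apply: leq_ltn_trans htd.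
by apply: leq_trans (subset_leq_card (subsetIl (val K) U)) _; rewrite cardD.
Qed.

Lemma geom_bound (R : rcfType) (r : R) m : 0 <= r -> r <= 1/2 ->
  \sum_(t < m) r ^+ t.+1 <= 2 * r.
Proof.
move=> h0 h1.
have : (1 - r) * \sum_(t < m) r ^+ t.+1 = r - r ^+ m.+1.
  elim: m => [|m IH]; first by rewrite big_ord0 expr1 mulr0 subrr.
  rewrite big_ord_recr /= mulrDr IH !exprS; ring.
move=> H.
have hr : 0 <= \sum_(t < m) r ^+ t.+1 by apply: sumr_ge0 => t _; apply: exprn_ge0.
have hm : 0 <= r ^+ m.+1 by apply: exprn_ge0.
nra.
Qed.

Lemma expD1_sub (R : rcfType) (z : R) a m : (a <= m)%N ->
  (z + 1) ^+ a - 1 = \sum_(t < m) z ^+ t.+1 *+ 'C(a, t.+1).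
Proof.
move=> ham; rewrite exprD1n (big_ord_widen m.+1 (fun i => z ^+ i *+ 'C(a, i))) //.
rewrite big_mkcond /= big_ord_recl /= bin0 expr0 mulr1n.
rewrite addrC addrK.
apply: eq_bigr => i _; rewrite /bump /= add1n; case: ltnP => // h; by rewrite bin_small // mulr0n.
Qed.

Lemma RU_bound (R : rcfType) n d (kap : R) (U : {set 'I_n}) : 1 <= kap -> (d <= n)%N ->
  \sum_(K : dsub n d) \sum_(L : dsub n d)
    ((val K :\: U == val L :\: U) && (val K :&: U != set0))%:R * (2 * kap ^+ #|val K :&: U|)
  <= 2 * (('C(n, d))%:R * \sum_(t < n) ((2 * #|U|%:R * kap - 1) * #|U|%:R * (d%:R / n%:R)) ^+ t.+1).
Proof.
move=> hk hdn.
have hk0 : 0 <= kap by apply: le_trans hk; exact: ler01.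
case: (posnP #|U|) => hu.
  rewrite big1; last first.
    move=> K _; rewrite big1 // => L _.
    have -> : val K :&: U = set0 by apply/eqP; rewrite -subset0 -(cards0_eq hu) subsetIr.
    by rewrite eqxx andbF mul0r.
  rewrite hu mulr0 mul0r big1 ?mulr0 // => t _; by rewrite expr0n.
set u := #|U|.
set z := 2 * u%:R * kap - 1.
have hu1 : 1 <= u%:R :> R by rewrite ler1n.
have hz : 0 <= z by rewrite /z subr_ge0; nra.
apply: le_trans (_ : \sum_(K : dsub n d) 2 * ((z + 1) ^+ #|val K :&: U| - 1) <= _).
  apply: ler_sum => K _.
  case: eqP => [KU0|/eqP KU0].
    rewrite big1 => [|L _]; last by rewrite andbF mul0r.
    by rewrite KU0 cards0 expr0 subrr mulr0.
  set a := #|val K :&: U|.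
  have ha : (0 < a)%N by rewrite card_gt0.
  under eq_bigr => L _ do rewrite andbT.
  rewrite -mulr_suml -natr_sum.
  have hc := countL U K; rewrite -/u -/a in hc.
  have hb := bin_le_exp u a.
  have hcnt : (\sum_(i : dsub n d) ((val K :\: U == val i :\: U) : nat))%:R <= (u ^ a)%:R :> R.
    rewrite ler_nat; exact: leq_trans hc hb.
  apply: le_trans (_ : (u ^ a)%:R * (2 * kap ^+ a) <= _).
    apply: ler_wpM2r; last exact: hcnt.
    by rewrite mulr_ge0 ?exprn_ge0.
  rewrite natrX /z subrK.
  have hy : 1 <= u%:R * kap by nra.
  have e1 : (2 * u%:R * kap) ^+ a = 2 ^+ a * (u%:R * kap) ^+ a by rewrite -mulrA exprMn.
  have e2 : 2 <= 2 ^+ a :> R.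
    have : forall m, (0 < m)%N -> 2 <= 2 ^+ m :> R.
      case=> // m _; rewrite exprS -[X in X <= _]mulr1; apply: ler_wpM2l.
        exact: ler0n.
      by apply: exprn_ege1; rewrite ler1n.
    exact.
  have e3 : 1 <= (u%:R * kap) ^+ a by exact: exprn_ege1.
  have e4 : u%:R ^+ a * (2 * kap ^+ a) = 2 * (u%:R * kap) ^+ a :> R by rewrite exprMn; ring.
  rewrite e4 e1; have h1 : 0 <= 2 ^+ a - 2 :> R by rewrite subr_ge0.
  have h2 : 0 <= (u%:R * kap) ^+ a - 1 :> R by rewrite subr_ge0.
  have := mulr_ge0 h1 h2; nra.
have aln : forall K : dsub n d, (#|val K :&: U| <= n)%N.
  by move=> K; rewrite -[X in (_ <= X)%N](card_ord n) max_card.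
under eq_bigr => K _ do rewrite (expD1_sub z (aln K)).
rewrite -mulr_sumr; apply: ler_wpM2l; first exact: ler0n.
rewrite exchange_big mulr_sumr; apply: ler_sum => t _ /=.
under eq_bigr => K _ do rewrite -mulr_natr.
rewrite -mulr_sumr -natr_sum.
apply: le_trans (_ : z ^+ t.+1 * (('C(u, t.+1))%:R * (('C(n, d))%:R * (d%:R / n%:R) ^+ t.+1)) <= _).
  apply: ler_wpM2l; first exact: exprn_ge0.
  exact: sumK_bin.
apply: le_trans (_ : z ^+ t.+1 * ((u ^ t.+1)%:R * (('C(n, d))%:R * (d%:R / n%:R) ^+ t.+1)) <= _).
  apply: ler_wpM2l; first exact: exprn_ge0.
  apply: ler_wpM2r; first by rewrite mulr_ge0 ?ler0n ?exprn_ge0 ?divr_ge0 ?ler0n.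
  by rewrite ler_nat bin_le_exp.
rewrite natrX !exprMn le_eqVlt; apply/orP; left; apply/eqP; ring.
Qed.



Lemma sym_bound (R : rcfType) (T : finType) (a : T -> R) (W : T -> T -> R) :
  (forall p q, W p q = W q p) ->
  \sum_p \sum_q a p * a q * W p q <= \sum_p a p ^+ 2 * \sum_q `|W p q|.
Proof.
move=> Ws.
apply: le_trans (_ : \sum_p \sum_q ((a p ^+ 2 + a q ^+ 2) / 2) * `|W p q| <= _).
  apply: ler_sum => p _; apply: ler_sum => q _.
  case: (lerP 0 (W p q)) => hW.
    rewrite ger0_norm //; have := sqr_ge0 (a p - a q); have := mulr_ge0 hW (sqr_ge0 (a p - a q)); nra.
  have hW2 : 0 <= - W p q by rewrite oppr_ge0; exact: ltW.
  rewrite ltr0_norm //; have := mulr_ge0 hW2 (sqr_ge0 (a p + a q)); nra.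
have -> : \sum_p \sum_q ((a p ^+ 2 + a q ^+ 2) / 2) * `|W p q| =
    (\sum_p \sum_q a p ^+ 2 * `|W p q|) / 2 + (\sum_p \sum_q a q ^+ 2 * `|W p q|) / 2.
  rewrite !mulr_suml -big_split /=; apply: eq_bigr => p _.
  rewrite !mulr_suml -big_split /=; apply: eq_bigr => q _; ring.
have -> : \sum_p \sum_q a q ^+ 2 * `|W p q| = \sum_p \sum_q a p ^+ 2 * `|W p q|.
  rewrite exchange_big /=; apply: eq_bigr => p _; apply: eq_bigr => q _; by rewrite Ws.
rewrite -splitr.
apply: ler_sum => p _; rewrite mulr_sumr; exact: lexx.
Qed.

Lemma cardDsub n d : #|{: dsub n d}| = 'C(n, d).
Proof.
rewrite card_sig; have := card_draws 'I_n d; rewrite card_ord => <-.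
by apply: eq_card => I; rewrite !inE.
Qed.

Lemma frob (R : rcfType) (T : finType) (A : T -> T -> R) s :
  (forall v, vnorm (mxapp A v) <= s * vnorm v) ->
  \sum_I \sum_J A I J ^+ 2 <= #|T|%:R * s ^+ 2.
Proof.
move=> Hs; rewrite exchange_big /= mulr_natl -sumr_const.
apply: ler_sum => J _.
pose v := fun K : T => (K == J)%:R : R.
have hv : vnorm v = 1.
  rewrite /vnorm (bigD1 J) //= big1 ?addr0 /v ?eqxx ?expr1n ?sqrtr1 //.
  by move=> K /negbTE ->; rewrite expr0n.
have hA : mxapp A v = fun I => A I J.
  apply: FunctionalExtensionality.functional_extensionality => I.
  rewrite /mxapp (bigD1 J) //= big1 ?addr0 /v ?eqxx ?mulr1 //.
  by move=> K /negbTE ->; rewrite mulr0.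
have := Hs v; rewrite hv hA mulr1 /vnorm => H.
have h0 := sqrtr_ge0 (\sum_I A I J ^+ 2).
rewrite -[X in X <= _]sqr_sqrtr; last by apply: sumr_ge0 => I _; apply: sqr_ge0.
apply: lerXn2r => //; rewrite nnegrE //; exact: le_trans H.
Qed.

Lemma M_sym (R : rcfType) Omega n (E : (Omega -> R) -> R) x (I J K L : {set 'I_n}) :
  M E x I J K L = M E x K L I J.
Proof. rewrite /M; apply: eq_bigr => i _; rewrite /bsum; congr mom; lia. Qed.

Theorem theorem1p7 (R : rcfType) :
  exists C c : R, 0 < C /\ 0 < c /\
  forall (n d : nat) (Omega : Type) (E : (Omega -> R) -> R) (x : 'I_n -> Omega -> R),
    (1 <= d)%N -> (d <= n)%N ->
    indep_model E x ->
    let K := Kmax E x in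
    let t3 := (Num.sqrt K * d%:R) ^+ 3 / n%:R in
    t3 < c ^+ 3 ->
    forall (A : dsub n d -> dsub n d -> R) (s : R),
      is_spectral_norm A s ->
      variance E (quadform x A) <= C * s ^+ 2 * ('C(n, d))%:R ^+ 2 * Num.sqrt t3.
Proof.
exists 32, (1/4); split; first by rewrite ltr0n.
split; first by rewrite divr_gt0 ?ltr0n.
move=> n d Omega E x hd1 hdn HE K t3 ht3 A s [Hs _].
have n0 : (0 < n)%N by apply: leq_trans hdn.
pose i0 : 'I_n := Ordinal n0.
have hk := kap_ge1 HE i0; have hsK := sK_ge1 HE i0; have hsK2 := sK2 HE i0.
have hn : 0 < n%:R :> R by rewrite ltr0n.
have hd : 1 <= d%:R :> R by rewrite ler1n.
have hdn' : d%:R <= n%:R :> R by rewrite ler_nat.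
have t3E : t3 = sK E x ^+ 3 * d%:R ^+ 3 / n%:R by rewrite /t3 exprMn.
have t3_ge0 : 0 <= t3.
  rewrite t3E; apply: divr_ge0; last exact: ler0n.
  apply: mulr_ge0; apply: exprn_ge0; [apply: le_trans hsK; exact: ler01 | exact: ler0n].
have ht3' : t3 <= 1 / 64.
  apply: ltW; apply: (lt_le_trans ht3); rewrite le_eqVlt; apply/orP; left; by apply/eqP; field.
have kt3 : kap E x * d%:R ^+ 3 / n%:R <= t3.
  rewrite t3E; apply: ler_wpM2r; first by rewrite invr_ge0 ler0n.
  apply: ler_wpM2r; first exact: exprn_ge0 (ler0n _ _).
  rewrite -hsK2; have h2 : 0 <= sK E x - 1 by rewrite subr_ge0.
  have := mulr_ge0 (sqr_ge0 (sK E x)) h2; rewrite !exprS expr0; nra.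
set p := 'C(n, d).
set B := 32 * p%:R * t3.
have RB : forall I J : dsub n d, \sum_(K0 : dsub n d) \sum_(L : dsub n d)
    `|M E x (val I) (val J) (val K0) (val L) - e E x (val I) (val J) * e E x (val K0) (val L)| <= B.
  move=> I J; set U := val I :|: val J.
  apply: le_trans (_ : \sum_(K0 : dsub n d) \sum_(L : dsub n d)
      ((val K0 :\: U == val L :\: U) && (val K0 :&: U != set0))%:R * (2 * kap E x ^+ #|val K0 :&: U|) <= _).
    apply: ler_sum => K0 _; apply: ler_sum => L _.
    exact: (@w_bound _ _ _ _ _ HE i0 (val I) (val J) (val K0) (val L) (etrans (cardD K0) (esym (cardD L)))).
  apply: le_trans (RU_bound U hk hdn) _.
  set u := #|U|.
  have hu1 : (d <= u)%N by have := subset_leq_card (subsetUl (val I) (val J)); rewrite cardD.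
  have hu2 : (u <= d + d)%N.
    by have := (leq_card_setU (val I) (val J)).1; rewrite !cardD.
  have hu1' : d%:R <= u%:R :> R by rewrite ler_nat.
  have hu2' : u%:R <= 2 * d%:R :> R by rewrite mulr2n mulrDl mul1r -natrD ler_nat.
  set r := (2 * u%:R * kap E x - 1) * u%:R * (d%:R / n%:R).
  have hr0 : 0 <= r.
    rewrite /r; apply: mulr_ge0; last by apply: divr_ge0; apply: ler0n.
    apply: mulr_ge0; last exact: ler0n.
    rewrite subr_ge0; nra.
  have hr : r <= 8 * t3.
    apply: le_trans (_ : 8 * (kap E x * d%:R ^+ 3 / n%:R) <= _); last first.
      by apply: ler_wpM2l.
    rewrite /r !mulrA ler_pdivrMr // mulfVK ?gt_eqF //.
    have hk0 : 0 <= kap E x by apply: le_trans hk; exact: ler01.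
    have hu0 : 0 <= u%:R :> R by exact: ler0n.
    have hd0 : 0 <= d%:R :> R by exact: ler0n.
    have a2 : u%:R * u%:R <= (2 * d%:R) * (2 * d%:R) :> R by apply: ler_pM.
    apply: le_trans (_ : 2 * kap E x * (u%:R * u%:R) * d%:R <= _).
      apply: ler_wpM2r => //; nra.
    have := ler_wpM2l (mulr_ge0 (ler0n _ 2) hk0) a2 => a3.
    have := ler_wpM2r hd0 a3; nra.
  have hrh : r <= 1 / 2.
    apply: (le_trans hr); lra.
  have := geom_bound n hr0 hrh => hg.
  rewrite /B; apply: le_trans (_ : 2 * (p%:R * (2 * r)) <= _).
    apply: ler_wpM2l; first by [].
    apply: ler_wpM2l; [exact: ler0n | exact: hg].
  have hp : 0 <= p%:R :> R by exact: ler0n.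
  nra.
pose W (P Q : dsub n d * dsub n d) := M E x (val P.1) (val P.2) (val Q.1) (val Q.2)
   - e E x (val P.1) (val P.2) * e E x (val Q.1) (val Q.2).
rewrite (var_formula HE A).
have -> : \sum_(I : dsub n d) \sum_(J : dsub n d) \sum_(K0 : dsub n d) \sum_(L : dsub n d)
    A I J * A K0 L * (M E x (val I) (val J) (val K0) (val L) - e E x (val I) (val J) * e E x (val K0) (val L))
  = \sum_(P : dsub n d * dsub n d) \sum_(Q : dsub n d * dsub n d) A P.1 P.2 * A Q.1 Q.2 * W P Q.
  rewrite pair_bigA /=; apply: eq_bigr => -[I J] _ /=; by rewrite pair_bigA.
have Ws : forall P Q, W P Q = W Q P by move=> P Q; rewrite /W M_sym mulrC.
apply: le_trans (sym_bound (fun P => A P.1 P.2) Ws) _.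
apply: le_trans (_ : \sum_(P : dsub n d * dsub n d) A P.1 P.2 ^+ 2 * B <= _).
  apply: ler_sum => -[I J] _; apply: ler_wpM2l; first exact: sqr_ge0.
  rewrite -(pair_bigA _ (fun K0 L => `|W (I, J) (K0, L)|)) /=; exact: RB.
rewrite -mulr_suml -(pair_bigA _ (fun I J => A I J ^+ 2)) /=.
have hF := frob Hs; rewrite cardDsub -/p in hF.
have hB0 : 0 <= B by rewrite /B; apply: mulr_ge0; [apply: mulr_ge0; exact: ler0n | exact: t3_ge0].
apply: le_trans (ler_wpM2r hB0 hF) _.
have hsq : t3 <= Num.sqrt t3.
  have h1 : t3 <= 1 by lra.
  rewrite -{1}(sqr_sqrtr t3_ge0) expr2.
  have h2 : 0 <= Num.sqrt t3 := sqrtr_ge0 t3.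
  have h3 : Num.sqrt t3 <= 1 by rewrite -sqrtr1 ler_sqrt //; exact: ler01.
  nra.
rewrite /B.
have hs2 : 0 <= s ^+ 2 := sqr_ge0 s.
have hp : 0 <= p%:R :> R := ler0n _ _.
have := ler_wpM2l (mulr_ge0 (mulr_ge0 (ler0n _ 32) hs2) (mulr_ge0 hp hp)) hsq.
move=> H; apply: le_trans (_ : 32 * s ^+ 2 * (p%:R * p%:R) * t3 <= _).
  rewrite le_eqVlt; apply/orP; left; apply/eqP; ring.
apply: le_trans H _; rewrite le_eqVlt; apply/orP; left; apply/eqP; ring.
Qed.
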